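(* Let $n\ge1$, $\gamma=(\gamma_1,\dots,\gamma_n)$ with $\gamma_i>0$, let $k\in\{-1,-3,-5,\dots\}$, and let $f$ be B-polyharmonic of order $\frac{1-k}{2}$ and even with respect to each variable. Then one of the solutions of the Cauchy problem $$(B_k)_tu=(\Delta_\gamma)_xu,\ x\in\mathbb{R}^n_+,\ t>0,\qquad u(x,0;k)=f(x),\quad u_t(x,0;k)=0$$ is given by $u(x,t;-1)=f(x)$ for $k=-1$, and for $k=-3,-5,\dots$ by $$u(x,t;k)=f(x)+\sum_{h=1}^{-\frac{k+1}{2}}\frac{\Delta_\gamma^h f}{(k+1)(k+3)\cdots(k+2h-1)}\,\frac{t^{2h}}{2\cdot4\cdots 2h}.$$
   Context: $\mathbb{R}^n_+=\{x\in\mathbb{R}^n:x_i>0\ \forall i\}$. $(B_\nu)_t=\partial_t^2+\frac{\nu}{t}\partial_t$; $\Delta_\gamma=(\Delta_\gamma)_x=\sum_{i=1}^n\big(\partial_{x_i}^2+\frac{\gamma_i}{x_i}\partial_{x_i}\big)$. $C^m_{ev}$: functions on $\mathbb{R}^n_+$, $m$ times differentiable, with all derivatives continuous up to $x_i=0$, and $\frac{\partial^{2j+1}f}{\partial x_i^{2j+1}}=0$ at $x_i=0$ for all $i$ and integers $j\ge0$ with $2j+1\le m$. A function $f$ is B-polyharmonic of order $p$ if $f\in C^{2p}_{ev}$ and $\Delta_\gamma^p f=0$. *)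

(* Defs.v *)
From HB Require Import structures.
From mathcomp Require Import all_boot all_order all_algebra.
From mathcomp Require Import all_classical all_reals all_analysis.
Set Implicit Arguments. Unset Strict Implicit. Unset Printing Implicit Defensive.
Import Order.TTheory GRing.Theory Num.Theory.
Import numFieldNormedType.Exports.
Local Open Scope classical_set_scope.
Local Open Scope ring_scope.

Section Bops.
Variables (R : realType) (n : nat).

Definition Rnp : set 'rV[R]_n := [set x | forall i, 0 < x ord0 i].
Definition Rnp_cl : set 'rV[R]_n := [set x | forall i, 0 <= x ord0 i].

Definition ei (i : 'I_n) : 'rV[R]_n := delta_mx 0 i.

Definition refl (i : 'I_n) (x : 'rV[R]_n) : 'rV[R]_n :=
  \row_j (if j == i then - x ord0 j else x ord0 j).

Definition dpart (i : 'I_n) (f : 'rV[R]_n -> R) : 'rV[R]_n -> R :=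
  fun x => 'D_(ei i) f x.

Definition dparts (s : seq 'I_n) (f : 'rV[R]_n -> R) : 'rV[R]_n -> R :=
  foldr dpart f s.

Definition Delta_gamma (gamma : 'rV[R]_n) (f : 'rV[R]_n -> R) : 'rV[R]_n -> R :=
  fun x => \sum_(i < n) (dpart i (dpart i f) x
                          + gamma ord0 i / x ord0 i * dpart i f x).

Definition Delta_gamma_pow (gamma : 'rV[R]_n) (p : nat) (f : 'rV[R]_n -> R) :=
  iter p (Delta_gamma gamma) f.

(* C^m_ev : m times differentiable on R^n_+, all derivatives of order <= m
   continuous up to the boundary, odd pure derivatives in x_i vanish at x_i = 0 *)
Definition Cev (m : nat) (f : 'rV[R]_n -> R) : Prop :=
  [/\ (forall s : seq 'I_n, (size s < m)%N ->
         forall x, Rnp x -> differentiable (dparts s f) x),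
      (forall s : seq 'I_n, (size s <= m)%N ->
         exists G : 'rV[R]_n -> R,
           {within Rnp_cl, continuous G} /\
           (forall x, Rnp x -> G x = dparts s f x)) &
      (forall (i : 'I_n) (j : nat), (j.*2.+1 <= m)%N ->
         forall y, Rnp_cl y -> y ord0 i = 0 ->
           dparts (nseq j.*2.+1 i) f @ within Rnp (nbhs y) --> (0 : R))].

Definition Bpolyharmonic (gamma : 'rV[R]_n) (p : nat) (f : 'rV[R]_n -> R) : Prop :=
  Cev p.*2 f /\ (forall x, Rnp x -> Delta_gamma_pow gamma p f x = 0).

End Bops.

(* Main.v *)
Require Import Defs.
From HB Require Import structures.
From mathcomp Require Import all_boot all_order all_algebra.
From mathcomp Require Import all_classical all_reals all_analysis.
From mathcomp Require Import lra ring.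
Import Order.TTheory GRing.Theory Num.Theory.
Import numFieldNormedType.Exports.
Local Open Scope classical_set_scope.
Local Open Scope ring_scope.

Section S.
Set Implicit Arguments. Unset Strict Implicit.
Variables (R : realType) (n : nat).
Notation V := 'rV[R]_n.

Lemma Rnp_near (x : V) : Rnp x -> \forall y \near x, Rnp y.
Proof.
move=> Px; apply: (@filter_forall V 'I_n (fun i y => 0 < y ord0 i) (nbhs x) _) => i.
apply: (cvgr_gt (f := fun y : V => y ord0 i) (x ord0 i)) => //.
exact: coord_continuous.
Qed.

Lemma zero_near_diff (d : V -> R) x : (\forall y \near x, d y = 0) ->
  differentiable d x.
Proof.
move=> dz; have d0 : d x = 0 := nbhs_singleton dz.
apply/diff_locallyP.
have H : d \o shift x = cst (d x) + \0 +o_ 0 id.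
  apply/eqaddoP => e e0.
  have : \forall h \near (0:V), d (h + x) = 0.
    rewrite (near_shift x) /=; apply: filterS dz => z dz0 /=; by rewrite sub0r addrNK.
  apply: filterS => h /= dh; rewrite !fctE /= dh d0 !addr0 subrr normr0.
  by rewrite mulr_ge0 // ltW.
rewrite (diff_unique (df := (\0 : {linear V -> R})) _ H) //.
  by split => //; apply: cst_continuous.
exact: cst_continuous.
Unshelve. all: by end_near. Qed.

Lemma near_eq_diff (f g : V -> R) x : differentiable f x ->
  (\forall y \near x, f y = g y) -> differentiable g x.
Proof.
move=> df e; have -> : g = f + (g - f) by apply/funext => y /=; rewrite addrC subrK.
apply: differentiableD => //; apply: zero_near_diff.
by apply: filterS e => y fy; rewrite !fctE fy subrr.
Qed.

Fixpoint Dk (r : nat) (g : V -> R) : Prop :=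
  match r with 0 => True | r'.+1 =>
    (forall x, Rnp x -> differentiable g x) /\ forall i, Dk r' (dpart i g) end.

Lemma dpart_ext (g h : V -> R) i x : Rnp x -> (forall y, Rnp y -> g y = h y) ->
  dpart i g x = dpart i h x.
Proof.
move=> Px e; rewrite /dpart; apply: near_eq_derive.
near=> y; apply: e; near: y; exact: Rnp_near.
Unshelve. all: by end_near.
Qed.

Lemma Dk_ext r (g h : V -> R) : Dk r g -> (forall y, Rnp y -> g y = h y) -> Dk r h.
Proof.
elim: r g h => // r IH g h [dg dpg] e; split.
  move=> x Px; apply: (@near_eq_diff g h x (dg x Px)).
  by apply: filterS (Rnp_near Px) => y; apply: e.
move=> i; apply: (IH _ _ (dpg i)) => y Py; exact: dpart_ext.
Qed.

Lemma Dk_mono r (g : V -> R) : Dk r.+1 g -> Dk r g.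
Proof.
elim: r g => // r IH g [dg dpg]; split => // i; exact: IH.
Qed.

Lemma Dk_le r r' (g : V -> R) : (r <= r')%N -> Dk r' g -> Dk r g.
Proof.
move=> /subnK <-; elim: (r' - r)%N => // d IH /=.
by move=> H; apply: IH; apply: Dk_mono; exact: H.
Qed.

Lemma Dk_cst r (a : R) : Dk r (fun _ => a).
Proof.
elim: r a => // r IH a; split => [x _|i]; first exact: differentiable_cst.
apply: (Dk_ext (IH 0)) => y _; rewrite /dpart.
by rewrite (derive_cst a).
Qed.

Lemma dpartD (g h : V -> R) i x : differentiable g x -> differentiable h x ->
  dpart i (fun y => g y + h y) x = dpart i g x + dpart i h x.
Proof. by move=> dg dh; rewrite /dpart (deriveD (diff_derivable dg) (diff_derivable dh)). Qed.

Lemma dpartM (g h : V -> R) i x : differentiable g x -> differentiable h x ->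
  dpart i (fun y => g y * h y) x = g x * dpart i h x + h x * dpart i g x.
Proof. by move=> dg dh; rewrite /dpart (deriveM (diff_derivable dg) (diff_derivable dh)). Qed.

Lemma dpartMr (g : V -> R) a i x : differentiable g x ->
  dpart i (fun y => g y * a) x = dpart i g x * a.
Proof. by move=> dg; rewrite /dpart (deriveMr _ (diff_derivable dg)) mulrC. Qed.

Lemma Dk_add r (g h : V -> R) : Dk r g -> Dk r h -> Dk r (fun y => g y + h y).
Proof.
elim: r g h => // r IH g h [dg dpg] [dh dph]; split.
  by move=> x Px; apply: differentiableD; [exact: dg|exact: dh].
move=> i; apply: (Dk_ext (IH _ _ (dpg i) (dph i))) => y Py.
by rewrite dpartD //; [exact: dg|exact: dh].
Qed.

Lemma Dk_mul r (g h : V -> R) : Dk r g -> Dk r h -> Dk r (fun y => g y * h y).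
Proof.
elim: r g h => // r IH g h [dg dpg] [dh dph]; split.
  by move=> x Px; apply: differentiableM; [exact: dg|exact: dh].
move=> i.
have H := Dk_add (IH _ _ (Dk_mono (conj dg dpg)) (dph i))
                 (IH _ _ (Dk_mono (conj dh dph)) (dpg i)).
apply: (Dk_ext H) => y Py.
by rewrite dpartM //; [exact: dg|exact: dh].
Qed.

Lemma dpart_coord i j x : dpart i (fun y : V => y ord0 j) x = @ei R n i ord0 j.
Proof.
rewrite /dpart.
have := @derive_mx R V 1 n id x (@ei R n i) (@derivable_id _ V x (@ei R n i)).
rewrite derive_id => /(congr1 (fun M : V => M ord0 j)).
by rewrite !mxE => ->.
Qed.

Lemma Dk_coord r j : Dk r (fun y : V => y ord0 j).
Proof.
case: r => // r; split => [x _|i]; first exact: differentiable_coord.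
by apply: (Dk_ext (Dk_cst r (@ei R n i ord0 j))) => y _; rewrite dpart_coord.
Qed.

Lemma Dk_inv (g : V -> R) : (forall r, Dk r g) -> (forall y, Rnp y -> g y != 0) ->
  forall r, Dk r (fun y => (g y)^-1).
Proof.
move=> Dg g0; elim => // r IH; split.
  move=> x Px; apply: differentiableV; last exact: g0.
  by have [dg _] := Dg 1%N; apply: dg.
move=> i.
have H := Dk_mul (Dk_cst r (-1)) (Dk_mul IH (Dk_mul IH ((Dg r.+1).2 i))).
apply: (Dk_ext H) => y Py.
have [dg _] := Dg 1%N.
rewrite /dpart deriveV //; last exact/diff_derivable/dg.
  by rewrite /= -exprVn expr2 mulN1r mulrA -mulNr.
exact: g0 Py.
Qed.


Lemma Dk_sum r (I : eqType) (s : seq I) (P : pred I) (F : I -> V -> R) :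
  (forall i, i \in s -> Dk r (F i)) -> Dk r (fun y => \sum_(i <- s | P i) F i y).
Proof.
elim: s => [|a s IH] DF.
  by apply: (Dk_ext (Dk_cst r 0)) => y _; rewrite big_nil.
have IH' := IH (fun i hi => DF i (@mem_behead _ (a :: s) i hi)).
case Pa: (P a).
  by apply: (Dk_ext (Dk_add (DF a (mem_head a s)) IH')) => y _; rewrite big_cons Pa.
by apply: (Dk_ext IH') => y _; rewrite big_cons Pa.
Qed.

Variable gamma : 'rV[R]_n.

Lemma Dk_Delta r g : Dk r.+2 g -> Dk r (Delta_gamma gamma g).
Proof.
move=> Dg; rewrite /Delta_gamma; apply: Dk_sum => i _.
apply: Dk_add; first exact: (Dg.2 i).2 i.
apply: Dk_mul; last exact: Dk_mono (Dg.2 i).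
apply: Dk_mul; first exact: Dk_cst.
apply: (Dk_inv (fun r => Dk_coord r i)) => y Py.
by rewrite lt0r_neq0 //; apply: Py.
Qed.

Lemma Dk_Delta_pow h r g : Dk (r + h.*2) g -> Dk r (Delta_gamma_pow gamma h g).
Proof.
elim: h r => [|h IH] r; first by rewrite addn0.
move=> Dg; apply: Dk_Delta; apply: IH.
by move: Dg; rewrite doubleS !addnS !addSn.
Qed.

Lemma Delta_add g h x : Rnp x -> Dk 2 g -> Dk 2 h ->
  Delta_gamma gamma (fun y => g y + h y) x = Delta_gamma gamma g x + Delta_gamma gamma h x.
Proof.
move=> Px Dg Dh; rewrite /Delta_gamma -big_split; apply: eq_bigr => i _ /=.
have e2 : dpart i (dpart i (fun y => g y + h y)) x =
          dpart i (fun y => dpart i g y + dpart i h y) x.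
  apply: dpart_ext => // y Py; apply: dpartD; [exact: Dg.1|exact: Dh.1].
rewrite e2 dpartD; first last.
- exact: ((Dh.2 i).1 x Px).
- exact: ((Dg.2 i).1 x Px).
rewrite dpartD; [|exact: Dg.1|exact: Dh.1].
by rewrite mulrDr addrACA.
Qed.

Lemma Delta_mulr g a x : Rnp x -> Dk 2 g ->
  Delta_gamma gamma (fun y => g y * a) x = Delta_gamma gamma g x * a.
Proof.
move=> Px Dg; rewrite /Delta_gamma mulr_suml; apply: eq_bigr => i _ /=.
have e2 : dpart i (dpart i (fun y => g y * a)) x =
          dpart i (fun y => dpart i g y * a) x.
  apply: dpart_ext => // y Py; apply: dpartMr; exact: Dg.1.
rewrite e2 dpartMr; last exact: ((Dg.2 i).1 x Px).
rewrite dpartMr; last exact: Dg.1.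
by rewrite mulrDl mulrA.
Qed.

Lemma Delta_cst a x : Rnp x -> Delta_gamma gamma (fun _ => a) x = 0.
Proof.
move=> Px; rewrite /Delta_gamma big1 // => i _.
have e : dpart i (dpart i (fun _ : V => a)) x = dpart i (fun _ => 0) x.
  by apply: dpart_ext => // y _; rewrite /dpart derive_cst.
by rewrite e /dpart !derive_cst mulr0 addr0.
Qed.

Lemma Delta_sum (I : eqType) (s : seq I) (F : I -> V -> R) x : Rnp x ->
  (forall i, i \in s -> Dk 2 (F i)) ->
  Delta_gamma gamma (fun y => \sum_(i <- s) F i y) x = \sum_(i <- s) Delta_gamma gamma (F i) x.
Proof.
move=> Px; elim: s => [|a s IH] DF.
  rewrite big_nil; under eq_fun do rewrite big_nil; exact: Delta_cst.
have IH' := IH (fun i hi => DF i (@mem_behead _ (a :: s) i hi)).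
have -> : (fun y => \sum_(j <- a :: s) F j y) = (fun y => F a y + \sum_(j <- s) F j y).
  by apply/funext => y; rewrite big_cons.
rewrite Delta_add //; first by rewrite IH' big_cons.
  exact: DF (mem_head a s).
by apply: Dk_sum => i hi; apply: DF; exact: (@mem_behead _ (a :: s)).
Qed.

Lemma Cev_Dk r g : Cev r g -> Dk r g.
Proof.
case=> H _ _; elim: r g H => // r IH g H; split.
  by move=> x Px; apply: (H [::]).
move=> i; apply: IH => s hs x Px.
have := H (s ++ [:: i]); rewrite size_cat addn1 ltnS => /(_ hs x Px).
by rewrite /dparts foldr_cat.
Qed.

End S.

Lemma key_alg (R : realType) (D Pp Qq Pp1 Qq1 c d t k : R) (j : nat) :
  Pp != 0 -> Qq != 0 -> c != 0 -> t != 0 -> d = (j.*2.+2)%:R -> c = k + d - 1 ->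
  Pp1 = Pp * c -> Qq1 = Qq * d ->
  D / Pp1 / Qq1 * (t ^+ j.*2 *+ (j.*2.+1) *+ (j.*2.+2))
  + k / t * (D / Pp1 / Qq1 * (t ^+ (j.*2.+1) *+ (j.*2.+2)))
  = D / Pp / Qq * t ^+ j.*2.
Proof.
move=> P0 Q0 c0 t0 -> ce -> ->.
have d0 : (j.*2.+2)%:R != 0 :> R by rewrite pnatr_eq0.
have E x (N : nat) : x *+ N = x * N%:R :> R by rewrite mulr_natr.
rewrite (E (t ^+ j.*2 *+ _)) (E (t ^+ j.*2)) (E (t ^+ _.+1)) exprSr.
move: c0 d0; rewrite ce -[(j.*2.+2)%:R]natr1.
set e := (j.*2.+1)%:R. set T := t ^+ j.*2. move=> c0 d0.
clearbody e T. field. by rewrite c0 d0 P0 Q0 t0.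
Qed.

Theorem theorem3p3 (R : realType) (n : nat) (gamma : 'rV[R]_n) (m : nat)
    (f : 'rV[R]_n -> R) :
  (0 < n)%N ->
  (forall i, 0 < gamma ord0 i) ->
  Bpolyharmonic gamma m.+1 f ->
  (forall i x, f (refl i x) = f x) ->
  let k : R := - (m.*2.+1)%:R in
  let u : 'rV[R]_n -> R -> R := fun x t =>
    f x + \sum_(1 <= h < m.+1)
            Delta_gamma_pow gamma h f x
              / (\prod_(1 <= l < h.+1) (k + (l.*2)%:R - 1))
              * (t ^+ h.*2 / (\prod_(1 <= l < h.+1) (l.*2)%:R)) in
  (forall x t, Rnp x -> 0 < t ->
     [/\ derivable (u x) t 1,
         derivable (derive1 (u x)) t 1,
         differentiable (fun y => u y t) x,
         (forall i, differentiable (dpart i (fun y => u y t)) x) &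
         derive1 (derive1 (u x)) t + k / t * derive1 (u x) t
           = Delta_gamma gamma (fun y => u y t) x]) /\
  (forall x, Rnp x ->
     [/\ u x 0 = f x, derivable (u x) 0 1 & derive1 (u x) 0 = 0]).
Proof.
move=> n0 gpos [Cf Hf] frefl k u.
have Df := Cev_Dk Cf.
have DD : forall h, (h <= m)%N -> Dk 2 (Delta_gamma_pow gamma h f).
  move=> h hm; apply: Dk_Delta_pow; apply: Dk_le Df.
  by rewrite add2n -doubleS leq_double ltnS.
pose P h := \prod_(1 <= l < h.+1) (k + (l.*2)%:R - 1).
pose Q h := \prod_(1 <= l < h.+1) ((l.*2)%:R : R).
pose a x h := Delta_gamma_pow gamma h f x / P h / Q h.
pose pol x : {poly R} := (f x)%:P + \sum_(1 <= h < m.+1) a x h *: 'X^(h.*2).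
have uE : forall x, u x = horner (pol x).
  move=> x; apply/funext => t; rewrite /u /pol /a hornerD hornerC horner_sum.
  congr (_ + _); apply: eq_bigr => h _; rewrite hornerZ hornerXn /P /Q.
  by rewrite [X in _ * X]mulrC mulrA.
have pol1 : forall x, (pol x)^`() =
    \sum_(1 <= h < m.+1) a x h *: ('X^((h.*2).-1) *+ h.*2).
  move=> x; rewrite /pol derivD derivC add0r raddf_sum; apply: eq_bigr => h _.
  by rewrite /= derivZ derivXn.
have pol2 : forall x, (pol x)^`()^`() =
    \sum_(1 <= h < m.+1) a x h *: ('X^((h.*2).-1.-1) *+ (h.*2).-1 *+ h.*2).
  move=> x; rewrite pol1 raddf_sum; apply: eq_bigr => h _.
  by rewrite /= derivZ !derivMn derivXn.
have d1 : forall x, derive1 (u x) = horner (pol x)^`() by move=> x; rewrite uE derivE.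
have d2 : forall x, derive1 (derive1 (u x)) = horner (pol x)^`()^`().
  by move=> x; rewrite d1 [RHS]derivE.
have c_neq0 : forall l, (1 <= l <= m)%N -> k + (l.*2)%:R - 1 != 0.
  move=> l /andP[_ lm]; apply: ltr0_neq0.
  have hl : (l.*2)%:R <= (m.*2)%:R :> R by rewrite ler_nat leq_double.
  rewrite /k -natr1; lra.
have P_neq0 : forall h, (h <= m)%N -> P h != 0.
  move=> h hm; rewrite /P big_seq; apply: (big_ind (fun x => x != 0)).
  - exact: oner_neq0.
  - by move=> x y hx hy; rewrite mulf_neq0.
  move=> l; rewrite mem_index_iota => /andP[l1 lh]; apply: c_neq0.
  by rewrite l1 /=; apply: leq_trans hm.
have Q_neq0 : forall h, Q h != 0.
  move=> h; rewrite /Q big_seq; apply: (big_ind (fun x => x != 0)).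
  - exact: oner_neq0.
  - by move=> x y hx hy; rewrite mulf_neq0.
  move=> l; rewrite mem_index_iota => /andP[l1 lh].
  by rewrite pnatr_eq0 double_eq0 -lt0n.
split => [x t Px t0|x Px].
  have Du : Dk 2 (fun y => u y t).
    rewrite /u; apply: Dk_add; first exact: (DD 0%N (leq0n m)).
    apply: Dk_sum => h; rewrite mem_index_iota => /andP[_ hm].
    apply: Dk_mul; last exact: Dk_cst.
    apply: Dk_mul; last exact: Dk_cst.
    exact: DD.
  split.
  - rewrite uE; exact: derivable_horner.
  - rewrite d1; exact: derivable_horner.
  - exact: Du.1 x Px.
  - move=> i; exact: (Du.2 i).1 x Px.
  have tn0 : t != 0 by rewrite gt_eqF.
  pose T j := Delta_gamma_pow gamma j.+1 f x / P j / Q j * t ^+ j.*2.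
  have eL : derive1 (derive1 (u x)) t + k / t * derive1 (u x) t = \sum_(0 <= j < m) T j.
    rewrite d2 d1 pol2 pol1 !horner_sum mulr_sumr -big_split big_add1 /=.
    apply: eq_big_nat => j /andP[_ jm].
    rewrite !hornerZ !hornerMn !hornerXn /a /T.
    apply: (@key_alg R _ (P j) (Q j) _ _ (k + (j.+1.*2)%:R - 1)
                    (j.+1.*2)%:R t k j).
    - exact: P_neq0 (ltnW jm).
    - exact: Q_neq0.
    - by apply: c_neq0; rewrite /= jm.
    - exact: tn0.
    - by [].
    - by [].
    - by rewrite /P big_nat_recr.
    - by rewrite /Q big_nat_recr.
  have eR : Delta_gamma gamma (fun y => u y t) x = \sum_(0 <= j < m.+1) T j.
    rewrite /u (Delta_add gamma Px (DD 0%N (leq0n m))); last first.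
      apply: Dk_sum => h; rewrite mem_index_iota => /andP[_ hm].
      apply: Dk_mul; last exact: Dk_cst.
      apply: Dk_mul; last exact: Dk_cst.
      exact: DD.
    rewrite (Delta_sum gamma Px); last first.
      move=> h; rewrite mem_index_iota => /andP[_ hm].
      apply: Dk_mul; last exact: Dk_cst.
      apply: Dk_mul; last exact: Dk_cst.
      exact: DD.
    rewrite [RHS]big_ltn //; congr (_ + _).
      by rewrite /T /P /Q !big_geq // expr0 !divr1 mulr1.
    apply: eq_big_seq => h; rewrite mem_index_iota => /andP[_ hm].
    rewrite (Delta_mulr gamma _ Px); last first.
      apply: Dk_mul; last exact: Dk_cst.
      exact: DD.
    rewrite (Delta_mulr gamma _ Px); last exact: DD.
    by rewrite /T mulrA mulrAC.
  rewrite eL eR big_nat_recr //= /T.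
  by rewrite (Hf x Px) !mul0r addr0.
split.
- rewrite /u big1_seq ?addr0 // => h /andP[_]; rewrite mem_index_iota => /andP[h1 _].
  by case: h h1 => // h _; rewrite doubleS expr0n /= mul0r mulr0.
- rewrite uE; exact: derivable_horner.
- rewrite d1 pol1 /= horner_sum big1_seq // => h /andP[_].
  rewrite mem_index_iota => /andP[h1 _]; case: h h1 => // h _.
  by rewrite hornerZ hornerMn hornerXn doubleS /= expr0n /= mul0rn mulr0.
Qed.
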